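(* A poset $(\Lambda,\le)$ is interval-finite and good if and only if every finitely generated ideal $\Gamma\subseteq\Lambda$ has a descending chain of finitely generated subideals $\Gamma=\Gamma_0\supseteq\Gamma_1\supseteq\Gamma_2\supseteq\cdots$ such that $|\Gamma_k\setminus\Gamma_{k+1}|<\infty$ for every $k\ge0$ and $\bigcap_{k\ge0}\Gamma_k=\emptyset$. Moreover, this chain can be chosen so that for each $k\ge0$ the elements of $\Gamma_k\setminus\Gamma_{k+1}$ are pairwise incomparable generators of $\Gamma_k$.
   Context: For a poset, $(\gamma]=\{\mu\mid\mu\le\gamma\}$; an ideal is a downward closed subset, finitely generated if it is $\bigcup_{i=1}^t(\lambda_i]$ for finitely many $\lambda_i$; a generator of an ideal $\Gamma$ is an element of a generating set. Interval-finite means every closed interval $[\mu,\lambda]$ is finite. An element $\mu$ is a predecessor of $\lambda$ if $\mu<\lambda$ and there is no $\pi$ with $\mu<\pi<\lambda$. A poset is good if (1) each non-minimal element has at least one but only finitely many predecessors, and (2) whenever $\mu<\lambda$ there is a predecessor $\lambda'$ of $\lambda$ with $\mu\le\lambda'$. *)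

(* Defs.v *)
From mathcomp Require Import all_boot all_order.
Set Implicit Arguments. Unset Strict Implicit. Unset Printing Implicit Defensive.
Import Order.Theory.
Local Open Scope order_scope.

Section PosetDefs.
Context {d : Order.disp_t} {T : porderType d}.

Definition finite_sub (A : T -> Prop) : Prop :=
  exists s : seq T, forall x, A x -> x \in s.

Definition downset (g : T) : T -> Prop := fun mu => mu <= g.

Definition ideal (G : T -> Prop) : Prop :=
  forall x y, y <= x -> G x -> G y.

Definition fg_ideal (G : T -> Prop) : Prop :=
  exists s : seq T, forall x, G x <-> exists2 l, l \in s & x <= l.

(* generator of a finitely generated ideal G: an element of its (unique,
   irredundant) generating set, i.e. a maximal element of G. *)
Definition generator (G : T -> Prop) (g : T) : Prop :=
  G g /\ forall x, G x -> g <= x -> x = g.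

Definition interval_finite : Prop :=
  forall mu lam : T, finite_sub (fun x => mu <= x <= lam).

Definition predecessor (mu lam : T) : Prop :=
  mu < lam /\ ~ (exists pi, mu < pi < lam).

Definition minimal (lam : T) : Prop := ~ (exists mu, mu < lam).

Definition good : Prop :=
  (forall lam : T, ~ minimal lam ->
     (exists mu, predecessor mu lam) /\ finite_sub (fun mu => predecessor mu lam))
  /\ (forall mu lam : T, mu < lam -> exists lam', predecessor lam' lam /\ mu <= lam').

Definition good_chain (G : T -> Prop) (C : nat -> T -> Prop) : Prop :=
  (forall x, C 0 x <-> G x)
  /\ (forall k, fg_ideal (C k))
  /\ (forall k x, C k.+1 x -> C k x)
  /\ (forall k, finite_sub (fun x => C k x /\ ~ C k.+1 x))
  /\ (forall x, exists k, ~ C k x).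

Definition strong_chain (G : T -> Prop) (C : nat -> T -> Prop) : Prop :=
  good_chain G C
  /\ (forall k x, C k x -> ~ C k.+1 x -> generator (C k) x)
  /\ (forall k x y, C k x -> ~ C k.+1 x -> C k y -> ~ C k.+1 y ->
        x <= y -> x = y).

End PosetDefs.

(* Main.v *)
Require Import Defs.
From mathcomp Require Import all_boot all_order.
From Stdlib Require Import Classical.
Set Implicit Arguments. Unset Strict Implicit. Unset Printing Implicit Defensive.
Import Order.Theory.

Section Helpers.
Local Open Scope order_scope.
Context {d : Order.disp_t} {T : porderType d}.

Lemma fin_exact (P : T -> Prop) : finite_sub P -> exists s : seq T, forall x, P x <-> x \in s.
Proof.
move=> [s Hs].
suff H : forall s : seq T, exists t : seq T, forall x, (P x /\ x \in s) <-> x \in t.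
  have [t Ht] := H s; exists t => x; rewrite -Ht; split; [move=> Px; split=> //; exact: Hs | by case].
elim=> [|a s' [t Ht]]; first by exists [::] => x; split=> [[]|].
case: (classic (P a)) => Pa.
- exists (a :: t) => x; split.
  + move=> [Px]; rewrite !in_cons; case/orP=> [->//|xs].
    by apply/orP; right; apply/Ht.
  + rewrite in_cons; case/orP=> [/eqP->|xt]; first by split=> //; rewrite in_cons eqxx.
    by have [Px xs] := proj2 (Ht x) xt; split=> //; rewrite in_cons xs orbT.
- exists t => x; split.
  + move=> [Px]; rewrite in_cons; case/orP=> [/eqP E|xs]; first by subst; contradiction.
    by apply/Ht.
  + by move=> /Ht [Px xs]; split=> //; rewrite in_cons xs orbT.
Qed.

Lemma fin_union (A B : T -> Prop) : finite_sub A -> finite_sub B ->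
  finite_sub (fun x => A x \/ B x).
Proof.
move=> [s Hs] [t Ht]; exists (s ++ t) => x [/Hs|/Ht] H; by rewrite mem_cat H ?orbT.
Qed.

Lemma fin_sub (A B : T -> Prop) : (forall x, A x -> B x) -> finite_sub B -> finite_sub A.
Proof. by move=> AB [s Hs]; exists s => x /AB /Hs. Qed.

Lemma fin_seq_union (F : T -> T -> Prop) (s : seq T) :
  (forall q, q \in s -> finite_sub (F q)) ->
  finite_sub (fun x => exists2 q, q \in s & F q x).
Proof.
elim: s => [|a s IH] H; first by exists [::] => x [q].
apply: (@fin_sub _ (fun x => F a x \/ exists2 q, q \in s & F q x)).
  move=> x [q]; rewrite in_cons; case/orP=> [/eqP->|qs] Fx; [by left|right; by exists q].
apply: fin_union; first by apply: H; rewrite in_cons eqxx.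
by apply: IH => q qs; apply: H; rewrite in_cons qs orbT.
Qed.

Lemma fg_down (G : T -> Prop) : fg_ideal G -> forall x y, y <= x -> G x -> G y.
Proof.
move=> [s Hs] x y yx /Hs [l ls xl]; apply/Hs; exists l => //; exact: le_trans xl.
Qed.

Lemma le_cases (x y : T) : x <= y -> x = y \/ x < y.
Proof. by rewrite le_eqVlt; case/orP=> [/eqP|]; [left|right]. Qed.

End Helpers.

Section Forward.
Local Open Scope order_scope.
Context {d : Order.disp_t} {T : porderType d}.
Hypothesis IF : @interval_finite d T.
Hypothesis GD : @good d T.

Variable s0 : seq T.

Fixpoint PP (k : nat) (p : T) : Prop :=
  match k with
  | 0 => p \in s0
  | k.+1 => exists q, PP k q /\ predecessor p q
  end.

Definition CC (k : nat) (x : T) : Prop := exists p, PP k p /\ x <= p.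

Lemma fin_PP k : finite_sub (PP k).
Proof.
elim: k => [|k IH]; first by exists s0.
have [s Hs] := fin_exact IH.
apply: (@fin_sub _ _ _ (fun x => exists2 q, q \in s & predecessor x q)).
  by move=> x [q [Pq pr]]; exists q => //; apply/Hs.
apply: fin_seq_union => q _.
case: (classic (minimal q)) => mq.
  by exists [::] => x [xq _]; case: mq; exists x.
by have [_ ?] := (GD.1 q mq).
Qed.

Lemma fg_CC k : fg_ideal (CC k).
Proof.
have [s Hs] := fin_exact (fin_PP k).
exists s => x; split.
- by move=> [p [Pp xp]]; exists p => //; apply/Hs.
- by move=> [l ls xl]; exists l; split=> //; apply/Hs.
Qed.

Lemma CC_dec k x : CC k.+1 x -> CC k x.
Proof.
move=> [p [[q [Pq [pq _]]] xp]]; exists q; split=> //.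
exact: le_trans xp (ltW pq).
Qed.

Lemma CC_max k x : CC k x -> ~ CC k.+1 x -> forall z, CC k z -> x <= z -> z = x.
Proof.
move=> Cx nCx z [p [Pp zp]] xz.
case: (le_cases xz) => [//|xltz].
have xp : x < p := lt_le_trans xltz zp.
have [p' [pr xp']] := GD.2 x p xp.
by case: nCx; exists p'; split=> //; exists p.
Qed.

Lemma CC_diff_P k x : CC k x -> ~ CC k.+1 x -> PP k x.
Proof.
move=> Cx nCx; have := CC_max Cx nCx.
case: Cx => p [Pp xp] H.
have E : p = x by apply: H xp; exists p; split.
by rewrite -E.
Qed.

Lemma chain_PP k p : PP k p -> exists c : seq T, exists2 q0, q0 \in s0 &
  [/\ size c = k.+1, uniq c, p <= q0 & forall y, y \in c -> p <= y <= q0].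
Proof.
elim: k p => [|k IH] p.
  move=> ps; exists [:: p]; exists p => //; split=> //.
  by move=> y; rewrite inE => /eqP->; rewrite lexx.
move=> [q [Pq [pq npi]]].
have [c [q0 q0s [sz uc qq0 Hc]]] := IH q Pq.
exists (p :: c); exists q0 => //; split.
- by rewrite /= sz.
- rewrite /= uc andbT; apply/negP => pc.
  have /andP[qp _] := Hc p pc.
  by have := lt_le_trans pq qp; rewrite ltxx.
- exact: le_trans (ltW pq) qq0.
- move=> y; rewrite in_cons; case/orP=> [/eqP->|yc].
    by rewrite lexx (le_trans (ltW pq) qq0).
  have /andP[qy yq0] := Hc y yc.
  by rewrite yq0 (le_trans (ltW pq) qy).
Qed.

Lemma CC_empty x : exists k, ~ CC k x.
Proof.
have [L HL] : finite_sub (fun y => exists2 q0, q0 \in s0 & x <= y <= q0).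
  by apply: fin_seq_union => q _; apply: IF.
exists (size L) => [[p [Pp xp]]].
have [c [q0 q0s [sz uc pq0 Hc]]] := chain_PP Pp.
have : (size c <= size L)%N.
  apply: uniq_leq_size => // y yc; apply: HL; exists q0 => //.
  by have /andP[py ->] := Hc y yc; rewrite (le_trans xp py).
by rewrite sz ltnn.
Qed.

Lemma strong_CC : strong_chain (fun x => exists2 l, l \in s0 & x <= l) CC.
Proof.
split; [split; [|split; [|split; [|split]]] | split].
- by move=> x; split=> [[p [ps xp]]|[l ls xl]]; [exists p|exists l].
- exact: fg_CC.
- exact: CC_dec.
- move=> k; apply: (@fin_sub _ _ _ (PP k)); first by move=> x [??]; exact: CC_diff_P.
  exact: fin_PP.
- exact: CC_empty.
- move=> k x Cx nCx; split=> //; exact: CC_max.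
- move=> k x y Cx nCx Cy _ xy; apply/esym; exact: (CC_max Cx nCx Cy xy).
Qed.

End Forward.

Lemma count_strict (X : eqType) (a b : pred X) (z : X) (s : seq X) :
  subpred a b -> b z -> ~~ a z -> z \in s -> (count a s < count b s)%N.
Proof.
move=> ab bz naz; elim: s => [//|y s IH]; rewrite in_cons /=.
case/orP=> [/eqP <-|zs].
  rewrite bz (negbTE naz) add0n add1n ltnS; exact: sub_count.
have := IH zs; case ay: (a y); first by rewrite (ab _ ay) ltn_add2l.
rewrite add0n => H; exact: leq_trans H (leq_addl _ _).
Qed.

Section Backward.
Local Open Scope order_scope.
Context {d : Order.disp_t} {T : porderType d}.
Hypothesis HC : forall G : T -> Prop, fg_ideal G -> exists C, good_chain G C.

Lemma fg_principal (lam : T) : fg_ideal (fun x => x <= lam).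
Proof.
exists [:: lam] => x; split; first by move=> xl; exists lam; rewrite ?inE.
by move=> [l]; rewrite inE => /eqP->.
Qed.

Lemma diff_fin (G : T -> Prop) C : good_chain G C ->
  forall k, finite_sub (fun x => C 0%N x /\ ~ C k x).
Proof.
move=> [_ [_ [dec [fin _]]]]; elim=> [|k IH].
  by exists [::] => x [].
apply: (@fin_sub _ _ _ (fun x => (C 0%N x /\ ~ C k x) \/ (C k x /\ ~ C k.+1 x))).
  by move=> x [C0 nC]; case: (classic (C k x)) => Ck; [right|left].
exact: fin_union.
Qed.

Lemma IF_of : @interval_finite d T.
Proof.
move=> mu lam.
have [C HCh] := HC (fg_principal lam).
have [k nk] := HCh.2.2.2.2 mu.
apply: (@fin_sub _ _ _ (fun x => C 0%N x /\ ~ C k x)); last first. by move: (diff_fin HCh k).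
move=> x /andP[mx xl]; split; first by apply/HCh.1.
move=> Ckx; apply: nk; exact (fg_down (HCh.2.1 k) mx Ckx).
Qed.

Lemma pred_of (mu lam : T) : mu < lam -> exists lam', predecessor lam' lam /\ mu <= lam'.
Proof.
move=> ml.
have [L HL] := IF_of mu lam.
suff H : forall (n : nat) (x : T), (count (fun y => (x < y)%O) L <= n)%N -> mu <= x -> x < lam ->
    exists lam', predecessor lam' lam /\ x <= lam'.
  by apply: (H _ mu (leqnn _)) => //.
elim=> [|n IH] x cnt mx xl.
- case: (classic (exists pi, x < pi < lam)) => [[pi /andP[xp pl]]|np].
    have : (count (fun y => (pi < y)%O) L < count (fun y => (x < y)%O) L)%N.
      apply: (count_strict (z := pi)) => //.
      + by move=> y /= py; exact: lt_trans xp py.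
      + by rewrite /= ltxx.
      + by apply: HL; rewrite (ltW pl) (le_trans mx (ltW xp)).
    by rewrite leqn0 in cnt; rewrite (eqP cnt).
  by exists x; split; [split|].
- case: (classic (exists pi, x < pi < lam)) => [[pi /andP[xp pl]]|np].
    have : (count (fun y => (pi < y)%O) L < count (fun y => (x < y)%O) L)%N.
      apply: (count_strict (z := pi)) => //.
      + by move=> y /= py; exact: lt_trans xp py.
      + by rewrite /= ltxx.
      + by apply: HL; rewrite (ltW pl) (le_trans mx (ltW xp)).
    move=> cl.
    have [l' [pr pil']] := IH pi (leq_trans cl cnt) (le_trans mx (ltW xp)) pl.
    by exists l'; split=> //; exact: le_trans (ltW xp) pil'.
  by exists x; split; [split|].
Qed.

Lemma good_of : @good d T.
Proof.
split; last exact: pred_of.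
move=> lam nml; split.
  case: (classic (exists mu, mu < lam)) => [[mu ml]|]; last by [].
  by have [l' [pr _]] := pred_of ml; exists l'.
have [C HCh] := HC (fg_principal lam).
have C0 : C 0%N lam by apply/HCh.1.
have [k nk] := HCh.2.2.2.2 lam.
have [j [Cj nCj]] : exists j, C j lam /\ ~ C j.+1 lam.
  elim: k nk => [//|k IH] nk.
  by case: (classic (C k lam)) => Ck; [exists k|apply: IH].
have [D HD] := HCh.2.2.2.1 j.
have [s' Hs'] := HCh.2.1 j.+1.
exists (D ++ s') => p [pl npi].
have Cjp : C j p := fg_down (HCh.2.1 j) (ltW pl) Cj.
case: (classic (C j.+1 p)) => Cp; last by rewrite mem_cat HD.
have [l ls pl'] := proj1 (Hs' p) Cp.
have Cl : C j.+1 l by apply/Hs'; exists l.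
have ll : l <= lam.
  have : C 0%N l.
    elim: (j.+1) Cl => [//|i IHi] Ci; apply: IHi; exact: HCh.2.2.1 _ _ Ci.
  by move/HCh.1.
have lltl : l < lam.
  rewrite lt_neqAle ll andbT; apply/eqP => E; apply: nCj; by rewrite -E.
case: (le_cases pl') => [->|plt]; first by rewrite mem_cat ls orbT.
by case: npi; exists l; rewrite plt lltl.
Qed.

End Backward.

Theorem proposition2p3 (d : Order.disp_t) (T : porderType d) :
  ((@interval_finite d T /\ @good d T) <->
     (forall G : T -> Prop, fg_ideal G -> exists C, good_chain G C))
  /\
  ((@interval_finite d T /\ @good d T) ->
     (forall G : T -> Prop, fg_ideal G -> exists C, strong_chain G C)).
Proof.
have strong : (@interval_finite d T /\ @good d T) ->
     (forall G : T -> Prop, fg_ideal G -> exists C, strong_chain G C).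
  move=> [IF GD] G [s0 Hs0].
  have [[c0 [fg [dec [fin emp]]]] rest] := strong_CC IF GD s0.
  exists (CC s0); split; last exact: rest.
  split=> //; move=> x; rewrite c0; split=> H; first by apply/Hs0.
  by apply/Hs0.
split=> //; split.
- by move=> HH G fG; have [C [HC _]] := strong HH G fG; exists C.
- by move=> HC; split; [exact: IF_of HC|exact: good_of HC].
Qed.
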